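(* $\displaystyle\min_{\underline y\in\mathcal F}\sum_{j\in\tilde R}c_jy_j\ge\min_{\underline x\in\mathcal F_0}\sum_{j\in\tilde R}c_jx_j$.
   Context: Let $G=(V,E)$ be a finite undirected graph with $V=Q\cup R\cup B$ (pairwise disjoint), where $Q$ is the set of sources, $R$ the set of potential relay locations and $B$ the set of potential sink locations; let $h_{\max}$ be a positive integer and $c_s,c_r\ge0$. Form the augmented graph $\tilde G=(\tilde V,\tilde E)$ with $\tilde V=V\cup\{0\}$, where $0$ is a new vertex (virtual sink), and $\tilde E=E\cup\{\{0,b\}:b\in B\}$. Let $\tilde R=R\cup B$ with node costs $c_j=c_r$ for $j\in R$ and $c_j=c_s$ for $j\in B$. For a source $k\in Q$, a node cut for $k$ is a set $\gamma\subseteq\tilde V\setminus\{k,0\}$ whose deletion disconnects $k$ from $0$ in $\tilde G$; it is minimal if no proper subset is a node cut; $\Gamma^k$ denotes the set of minimal node cuts for $k$. A vector $\underline y=((y_{j,k})_{k\in Q,\,j\in\tilde V\setminus\{k,0\}},(y_j)_{j\in\tilde R})$ belongs to $\mathcal F$ iff: (i) $\sum_{j\in\gamma}y_{j,k}\ge1$ for all $\gamma\in\Gamma^k$, $k\in Q$; (ii) $y_j\ge y_{j,k}$ for all $j\in\tilde R$, $k\in Q$; (iii) $\sum_{j\in\tilde V\setminus\{k,0\}}y_{j,k}\le h_{\max}$ for all $k\in Q$; (iv) all $y_{j,k},y_j\in\{0,1\}$. For $k\in Q$ let $\mathcal P'_k$ be the set of paths in $\tilde G$ from $k$ to $0$ with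 at most $h_{\max}+1$ edges, and let $\mathcal U_0$ be the set of tuples $\underline g=(p_k)_{k\in Q}$ with $p_k\in\mathcal P'_k$. For $\underline g\in\mathcal U_0$ define $\underline x(\underline g)$ by $x_{j,k}=1$ if $j$ is a vertex of $p_k$ and $0$ otherwise ($k\in Q$, $j\in\tilde V\setminus\{k,0\}$), and $x_j=1$ if $x_{j,k}=1$ for some $k\in Q$ and $0$ otherwise ($j\in\tilde R$). Let $\mathcal F_0=\{\underline x(\underline g):\underline g\in\mathcal U_0\}$. A minimum over an empty set is taken to be $+\infty$. *)

(* Defs.v *)
(* with MathComp-Analysis extended reals for the minima
   (ereal_inf of the empty set is +oo, matching "min over empty = +oo"). *)
From HB Require Import structures.
From mathcomp Require Import all_boot all_order all_algebra.
From mathcomp Require Import classical_sets reals constructive_ereal ereal.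
Set Implicit Arguments. Unset Strict Implicit. Unset Printing Implicit Defensive.
Import Order.TTheory GRing.Theory Num.Theory.
Local Open Scope classical_set_scope.
Local Open Scope ring_scope.

(* The augmented vertex set  V~ = V ∪ {0}  is  option V,  None = virtual sink 0. *)
Section Network.
Variable V : finType.
Variable e : rel V.
Variables (Q Rl B : {set V}).       (* sources, relay locations, sink locations *)
Variable hmax : nat.

Definition eaug (u v : option V) : bool :=
  match u, v with
  | Some a, Some b => e a b
  | Some a, None => a \in B
  | None, Some b => b \in B
  | None, None => false
  end.

(* index set  V~ \ {k,0}  of the variables y_{j,k} *)
Definition dom (k : V) (j : option V) : bool := (j != Some k) && (j != None).

Definition node_cut (k : V) (g : {set option V}) : bool :=
  [forall j, (j \in g) ==> dom k j] &&
  ~~ connect [rel u v | [&& eaug u v, u \notin g & v \notin g]] (Some k) None.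

Definition min_node_cut (k : V) (g : {set option V}) : bool :=
  minset (node_cut k) g.

Definition Rt : {set V} := Rl :|: B.

(* A 0/1 vector  y = ((y_{j,k}), (y_j)):  [yk y k j] is y_{j,k}  and
   [yr y j] is y_j  (j ∈ R~ ⊆ V).  Entries outside the index sets
   (k ∉ Q, or j ∉ V~\{k,0}, or j ∉ R~) are required to be 0, so that such
   records correspond bijectively to the paper's vectors. *)
Record vec := Vec { yk : V -> option V -> bool; yr : V -> bool }.

Definition wf_vec (y : vec) : Prop :=
  (forall k j, ~~ ((k \in Q) && dom k j) -> yk y k j = false) /\
  (forall j, j \notin Rt -> yr y j = false).

Definition inF (y : vec) : Prop :=
  wf_vec y /\
  (forall k, k \in Q -> forall g, min_node_cut k g ->
       (1 <= \sum_(j in g) yk y k j)%N) /\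
  (forall j k, j \in Rt -> k \in Q -> (yk y k (Some j) <= yr y j)%N) /\
  (forall k, k \in Q -> (\sum_(j | dom k j) yk y k j <= hmax)%N).
(* (iv) integrality is built in: entries are booleans *)

(* p (a sequence of vertices after k) is a path in G~ from k to 0 with
   at most hmax+1 edges: consecutive vertices adjacent, ends at 0,
   no repeated vertex; the number of edges is size p. *)
Definition is_path (k : V) (p : seq (option V)) : bool :=
  [&& path eaug (Some k) p, last (Some k) p == None,
      uniq (Some k :: p) & (size p <= hmax.+1)%N].

Definition xvec (g : V -> seq (option V)) : vec :=
  Vec (fun k j => [&& k \in Q, dom k j & j \in Some k :: g k])
      (fun j => (j \in Rt) && [exists k in Q, Some j \in Some k :: g k]).

Definition inF0 (x : vec) : Prop :=
  exists g : V -> seq (option V),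
    (forall k, k \in Q -> is_path k (g k)) /\ x = xvec g.

End Network.

Definition cost (T : realType) (V : finType) (Rl B : {set V}) (cs cr : T)
    (y : vec V) : T :=
  \sum_(j in Rt Rl B) (if j \in Rl then cr else cs) *+ yr y j.

(* Main.v *)
Require Import Defs.
From HB Require Import structures.
From mathcomp Require Import all_boot all_order all_algebra.
From mathcomp Require Import classical_sets reals constructive_ereal ereal.
Import Order.TTheory GRing.Theory Num.Theory.
Local Open Scope ring_scope.

Lemma path_all_r (T : eqType) (r : rel T) (P : pred T) x p :
  path r x p -> (forall u v, r u v -> P v) -> all P p.
Proof.
elim: p x => [//|a p IH] x /= /andP[ra pa] H.
by rewrite (H _ _ ra) (IH a pa H).
Qed.

Lemma exists_path (V : finType) (e : rel V) (Q Rl B : {set V}) (hmax : nat)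
  (y : vec V) k :
  inF e Q Rl B hmax y -> k \in Q ->
  exists p, is_path e B hmax k p /\
    (forall j, Some j \in p -> yk y k (Some j)) /\ Some k \notin p.
Proof.
move=> [wf [Hcut [Hlink Hhop]]] kQ.
set g := [set j | dom k j && ~~ yk y k j].
set r := [rel u v | [&& eaug e B u v, u \notin g & v \notin g]].
have Hc : connect r (Some k) None.
  apply: contraT => Hnc.
  have nc : node_cut e B k g.
    rewrite /node_cut Hnc andbT; apply/forallP => j; apply/implyP.
    by rewrite inE => /andP[].
  have [g0 mg0 sub] := minset_exists nc.
  have := Hcut k kQ g0 mg0.
  rewrite big1 // => j jg0.
  have := fintype.subsetP sub j jg0; rewrite inE => /andP[_ /negbTE ->] //.
move/connectP: Hc => [p0 pp0 lp0].
move: lp0; case: (shortenP pp0) => p pp up _ lp.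
have pe : path (eaug e B) (Some k) p.
  by apply: sub_path pp => u v /= /and3P[].
have allp : all (fun v => v \notin g) p.
  by apply: (@path_all_r _ r (fun v => v \notin g) _ _ pp) => u v /= /and3P[].
have kp : Some k \notin p by move: up => /= /andP[].
have Hy : forall j, Some j \in p -> yk y k (Some j).
  move=> j jp; move/allP: allp => /(_ _ jp); rewrite inE negb_and negbK.
  case/orP=> // /negP; case; rewrite /dom /= andbT.
  by apply/negP => /eqP E; rewrite -E jp in kp.
exists p; split; last by [].
rewrite /is_path pe -lp eqxx up /=.
move: lp up allp kp Hy pe pp; case/lastP: p => [|q z] //=.
rewrite last_rcons => <- /andP[_ uq] _ kp Hy _ _.
rewrite size_rcons ltnS; apply: leq_trans (Hhop k kQ).
rewrite rcons_uniq in uq; case/andP: uq => Nq uq.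
have -> : size q = (\sum_(j <- q) 1)%N by rewrite sum1_size.
rewrite big_uniq //.
rewrite big_mkcond [X in (_ <= X)%N]big_mkcond /=.
apply: leq_sum => j _.
case jq: (j \in q) => //.
case: j jq => [j|] jq; last by rewrite jq in Nq.
have := Hy j; rewrite mem_rcons in_cons jq orbT => /(_ isT) ->.
suff -> : dom k (Some j) by [].
rewrite /dom andbT; apply/eqP => E.
by rewrite -E mem_rcons in_cons jq orbT in kp.
Qed.

Theorem corollary3 (T : realType) (V : finType) (e : rel V)
    (Q Rl B : {set V}) (hmax : nat) (cs cr : T) :
  symmetric e ->
  [disjoint Q & Rl] -> [disjoint Q & B] -> [disjoint Rl & B] ->
  Q :|: Rl :|: B = [set: V] ->
  (0 < hmax)%N -> 0 <= cs -> 0 <= cr ->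
  (ereal_inf [set (cost Rl B cs cr y)%:E | y in inF e Q Rl B hmax]%classic
   >= ereal_inf [set (cost Rl B cs cr x)%:E | x in inF0 e Q Rl B hmax]%classic)%E.
Proof.
move=> _ dQR dQB _ _ _ cs0 cr0.
apply/ereal_infP => _ [y yF <-].
apply: ge_ereal_inf.
have H : forall k, exists p, k \in Q -> is_path e B hmax k p /\
    (forall j, Some j \in p -> yk y k (Some j)) /\ Some k \notin p.
  move=> k; case kQ: (k \in Q); last by exists [::].
  by have [p Hp] := @exists_path V e Q Rl B hmax y k yF kQ; exists p.
have [g Hg] := boolp.choice H.
exists (cost Rl B cs cr (xvec Q Rl B g))%:E.
  exists (xvec Q Rl B g) => //; exists g; split => // k kQ.
  by case: (Hg k kQ).
rewrite lee_fin /cost ler_sum // => j jR.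
have c0 : 0 <= (if j \in Rl then cr else cs) by case: ifP.
case xj: (yr (xvec Q Rl B g) j); last by rewrite mulr0n mulrn_wge0.
suff -> : yr y j by [].
move: xj => /= /andP[_ /existsP[k /andP[kQ]]].
rewrite in_cons => /orP[/eqP [E]|jg].
  subst k; exfalso.
  move: jR; rewrite /Rt inE => /orP[jR|jB].
    by rewrite (disjointFr dQR kQ) in jR.
  by rewrite (disjointFr dQB kQ) in jB.
case: (Hg k kQ) => _ [Hy _].
have := Hy j jg.
move: yF => [_ [_ [Hl _]]] => ykj.
by have := Hl j k jR kQ; rewrite ykj; case: (yr y j).
Qed.
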